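(* Let $n\ge1$. For every $\mathbf t\in\Delta_{n-1}$ and every vertex $x\in U_n\cup V_n$, the matrix $\rho_{\mathbf t}(p_x)\in M_{U_n}$ is in $\mathbf t$-block diagonal form.
   Context: For $n\ge1$, identify integers $0\le i<2^n$ with their $n$-digit binary representations $i=\sum_k i_k2^k$; $\mathrm{par}_k(i)=\sum_{r=0}^k i_r\bmod2$, and $i\#k$ is $i$ with its $k$-th digit flipped. The hypercube $Q_n$ has vertex classes $U_n=\{i<2^n\mid\mathrm{par}_{n-1}(i)=0\}$, $V_n=\{j<2^n\mid\mathrm{par}_{n-1}(j)=1\}$, with $i\in U_n$, $j\in V_n$ adjacent iff $j=i\#k$ for some $k<n$. $C^\ast(Q_n)$ is the universal unital C*-algebra generated by projections $p_x$ with $\sum_{u\in U_n}p_u=1=\sum_{v\in V_n}p_v$ and $p_up_v=0$ for non-adjacent $u,v$. $\Delta_{n-1}=\{[t_0,\dots,t_{n-1}]\mid t_k\ge0,\sum t_k=1\}$. For $\mathbf t\in\Delta_{n-1}$: $c_{\mathbf t}(ij)=(-1)^{\mathrm{par}_k(i)}\sqrt{t_k}$ for $i\in U_n$, $j=i\#k$ (and $0$ for non-adjacent $i,j$); $\rho_{\mathbf t}:C^\ast(Q_n)\to M_{U_n}$ is the representation with $\rho_{\mathbf t}(p_i)=E_{ii}$ ($i\in U_n$) and $\rho_{\mathbf t}(p_j)=[c_{\mathbf t}(i_1j)\overline{c_{\mathbf t}(i_2j)}]_{i_1,i_2\in U_n}$ ($j\in V_n$). $Q_n(\mathbf t)$ is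 the graph obtained from $Q_n$ by deleting all edges $ij$ with $j=i\#k$ and $t_k=0$; a matrix $A\in M_{U_n}$ is in $\mathbf t$-block diagonal form if $A_{i_1i_2}=0$ whenever $i_1,i_2$ lie in distinct connected components of $Q_n(\mathbf t)$. *)

(* Defs.v *)
From mathcomp Require Import all_boot all_order all_algebra.
Set Implicit Arguments. Unset Strict Implicit. Unset Printing Implicit Defensive.
Import Order.TTheory GRing.Theory Num.Theory.
Local Open Scope ring_scope.

Definition digit (k i : nat) : bool := odd (i %/ 2 ^ k)%N.

Definition par (k i : nat) : bool := odd (\sum_(r < k.+1) digit r i)%N.

Definition flip (i k : nat) : nat := if digit k i then (i - 2 ^ k)%N else (i + 2 ^ k)%N.

(* vertices of Q_n are the integers 0 <= i < 2^n *)
Definition vertex (n : nat) := 'I_(2 ^ n).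

Definition inU (n : nat) (i : vertex n) : bool := ~~ par n.-1 i.
Definition inV (n : nat) (j : vertex n) : bool := par n.-1 j.

Definition Uidx (n : nat) := {i : vertex n | inU i}.

Definition in_simplex (R : realFieldType) (n : nat) (t : 'I_n -> R) : Prop :=
  (forall k, 0 <= t k) /\ \sum_(k < n) t k = 1.

Definition ct (R : rcfType) (n : nat) (t : 'I_n -> R) (i j : vertex n) : R :=
  match [pick k : 'I_n | val j == flip (val i) k] with
  | Some k => (-1) ^+ par k (val i) * Num.sqrt (t k)
  | None => 0
  end.

(* rho_t(p_x) as a matrix indexed by U_n x U_n.  Since c_t is real-valued,
   complex conjugation is the identity on it. *)
Definition rho (R : rcfType) (n : nat) (t : 'I_n -> R) (x : vertex n)
    (i1 i2 : Uidx n) : R :=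
  if inU x then ((val i1 == x) && (val i2 == x))%:R
  else ct t (val i1) x * ct t (val i2) x.

Definition Qt_edge (R : realFieldType) (n : nat) (t : 'I_n -> R) : rel (vertex n) :=
  fun i j => [exists k : 'I_n, (t k != 0) && (val j == flip (val i) k)].

Definition block_diag (R : realFieldType) (n : nat) (t : 'I_n -> R)
    (A : Uidx n -> Uidx n -> R) : Prop :=
  forall i1 i2 : Uidx n, ~~ connect (Qt_edge t) (val i1) (val i2) -> A i1 i2 = 0.

(* Main.v *)
Require Import Defs.
From mathcomp Require Import all_boot all_order all_algebra.
From mathcomp Require Import zify.
Import Order.TTheory GRing.Theory Num.Theory.
Local Open Scope ring_scope.

Lemma digit_flip (i k : nat) : digit k (flip i k) = ~~ digit k i /\
  (digit k i -> (2 ^ k <= i)%N).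
Proof.
rewrite /flip /digit.
have p : (0 < 2 ^ k)%N by rewrite expn_gt0.
move: p; set d := (2 ^ k)%N => p.
have rd : (i %% d < d)%N by rewrite ltn_mod.
rewrite (divn_eq i d); move: (i %/ d)%N (i %% d)%N rd => q r rd.
rewrite divnMDl // (divn_small rd) addn0.
case: (boolP (odd q)) => oq.
- have q1 : (1 <= q)%N by case: q oq {rd} => //.
  have -> : (q * d + r - d = (q - 1) * d + r)%N by rewrite mulnBl mul1n; nia.
  rewrite divnMDl // divn_small // addn0; split; last by move=> _; nia.
  by case: q oq q1 => // q0 /= oq _; rewrite subn1 /= (negbTE oq).
- have -> : (q * d + r + d = (q + 1) * d + r)%N by nia.
  rewrite divnMDl // divn_small // addn0 addn1 /=; split=> //.

Qed.

Lemma flipK (i k : nat) : flip (flip i k) k = i.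
Proof.
have [h1 h2] := digit_flip i k.
rewrite {1}/flip h1; move: h1 h2; rewrite /flip.
case: (digit k i) => /= _ h; last by rewrite addnK.
by rewrite subnK // h.
Qed.

Theorem lemma6p3 (R : rcfType) (n : nat) (hn : (1 <= n)%N) (t : 'I_n -> R)
  (ht : in_simplex t) (x : vertex n) :
  block_diag t (rho t x).
Proof.
move=> i1 i2 nc; rewrite /rho.
case: (inU x).
  case: (boolP ((val i1 == x) && (val i2 == x))) => // /andP[/eqP e1 /eqP e2].
  by move: nc; rewrite e1 e2 connect0.
have edge : forall i : Uidx n, ct t (val i) x != 0 ->
    Qt_edge t (val i) x /\ Qt_edge t x (val i).
  move=> i; rewrite /ct; case: pickP => [k /eqP e nz|_]; last by rewrite eqxx.
  have tk : t k != 0.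
    apply: contraNneq nz => ->; by rewrite sqrtr0 mulr0.
  split; apply/existsP; exists k; rewrite tk /=; first by rewrite e.
  by rewrite e flipK.
case: (eqVneq (ct t (val i1) x) 0) => [->|n1]; first by rewrite mul0r.
case: (eqVneq (ct t (val i2) x) 0) => [->|n2]; first by rewrite mulr0.
have [a _] := edge i1 n1; have [_ b] := edge i2 n2.
case/negP: nc; apply: (connect_trans (y := x)); exact: connect1.
Qed.
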